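(* Consider robust dynamic pricing with horizon $T$, valuation $v^\star\in[0,1)$, and feedback corrupted in at most $C$ rounds, where $C$ is known to the learner. The meta-algorithm described in the context, with the commitment subroutine \textsc{CommitKnown}, guarantees \[ R_T\le \mathcal O(C+\log T), \] with a hidden constant independent of $T$, $C$, $v^\star$ and the adversary.
   Context: Robust dynamic pricing: there are $T$ rounds and an unknown valuation $v^\star\in[0,1)$. At each round $t$ the seller posts a price $p_t\in[0,1]$. The true sale indicator is $y_t=\mathbbm 1\{p_t\le v^\star\}$; the seller observes $\sigma_t\in\{0,1\}$, and at most $C$ rounds are corrupted: $|\{t\in[T]:\sigma_t\neq y_t\}|\le C$. The adversary decides whether to corrupt round $t$ based on the history and on the seller's distribution over $p_t$, but not on the realized $p_t$ (how it corrupts may depend on the realized price). Revenue is $r_t=p_t\,\mathbbm 1\{p_t\le v^\star\}$ and regret is $R_T=Tv^\star-\sum_{t=1}^T r_t$. $\log$ is base $2$. Meta-algorithm: let $D=\lceil\log_2 T\rceil$. Consider the complete binary tree of intervals of depth $D$ with root $[0,1)$, where each non-leaf node $[L,R)$ has children $[L,M)$ and $[M,R)$, $M=(L+R)/2$; the depth-$D$ nodes are the leaves (each of length at most $1/T$). The algorithm keeps a current node $I$, initially the root, and repeats until the horizon ends: if $I=[L,R)$ is not a leaf, it performs a safety check — post $L$ and observe $\sigma_L$, post $R$ and observe $\sigma_R$; the check fails if $\sigma_L=0$ or $\sigma_R=1$ (by convention the query at $L=0$ and the query at $R=1$ always count as passing). On failure $I$ becomes its parent; otherwise it posts $M$, observes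 $\sigma_M$, and $I$ becomes $[M,R)$ if $\sigma_M=1$ and $[L,M)$ if $\sigma_M=0$. If $I$ is a leaf, the commitment subroutine is run on $I$; if it returns FAIL, $I$ becomes its parent. \textsc{CommitKnown}: each leaf $\ell$ has a counter $s_\ell$, initialized to $0$ at the start of the horizon and shared across all calls. On leaf $\ell=[L,R)$ it repeats: if $s_\ell\le C$, post $L$ and observe $\sigma_L$, post $R$ and observe $\sigma_R$; if $\sigma_L=0$ or $\sigma_R=1$, return FAIL, else increase $s_\ell$ by $1$. If $s_\ell>C$, post $L$ (and continue doing so). *)

(* Defs.v *)
From Stdlib Require Import Reals Lra Lia Arith List.
Import ListNotations.
Open Scope R_scope.

(** Robust dynamic pricing: the meta-algorithm with CommitKnown.
    A node of the dyadic tree is a pair (d, k) (depth d, index k < 2^d),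
    representing the interval [k/2^d, (k+1)/2^d). *)

Definition nodeL (d k : nat) : R := INR k / INR (2 ^ d).
Definition nodeR (d k : nat) : R := INR (S k) / INR (2 ^ d).
Definition nodeM (d k : nat) : R := INR (2 * k + 1) / INR (2 ^ (S d)).

(** NCheckL / NCheckR b / NMid : safety check and midpoint query at a non-leaf
      (b records whether the query at L passed).
    LCheckL / LCheckR b / LCommit : CommitKnown on a leaf. *)
Inductive phase : Type :=
| NCheckL | NCheckR (bL : bool) | NMid
| LCheckL | LCheckR (bL : bool) | LCommit.

Record state : Type := mkState {
  st_d : nat;
  st_k : nat;
  st_ph : phase;
  st_s : nat -> nat      (* leaf counters s_l (indexed by leaf index), shared across calls *)
}.

Definition depth (T : nat) : nat := Nat.log2_up T.

Definition enter (T C : nat) (d k : nat) (s : nat -> nat) : state :=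
  if Nat.ltb d (depth T) then mkState d k NCheckL s
  else if Nat.leb (s k) C then mkState d k LCheckL s
  else mkState d k LCommit s.

Definition init_state (T C : nat) : state := enter T C 0 0 (fun _ => 0%nat).

Definition to_parent (T C : nat) (st : state) : state :=
  enter T C (Nat.pred (st_d st)) (Nat.div2 (st_k st)) (st_s st).

Definition price (st : state) : R :=
  match st_ph st with
  | NCheckL | LCheckL | LCommit => nodeL (st_d st) (st_k st)
  | NCheckR _ | LCheckR _ => nodeR (st_d st) (st_k st)
  | NMid => nodeM (st_d st) (st_k st)
  end.

Definition passL (st : state) (sigma : bool) : bool :=
  orb (Nat.eqb (st_k st) 0) sigma.
Definition passR (st : state) (sigma : bool) : bool :=
  orb (Nat.eqb (S (st_k st)) (2 ^ st_d st)) (negb sigma).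

Definition incr (s : nat -> nat) (k : nat) : nat -> nat :=
  fun j => if Nat.eqb j k then S (s j) else s j.

Definition step (T C : nat) (st : state) (sigma : bool) : state :=
  let d := st_d st in let k := st_k st in let s := st_s st in
  match st_ph st with
  | NCheckL => mkState d k (NCheckR (passL st sigma)) s
  | NCheckR bL =>
      if andb bL (passR st sigma) then mkState d k NMid s
      else to_parent T C st
  | NMid =>
      if sigma then enter T C (S d) (2 * k + 1) s
      else enter T C (S d) (2 * k) s
  | LCheckL => mkState d k (LCheckR (passL st sigma)) s
  | LCheckR bL =>
      if andb bL (passR st sigma) then enter T C d k (incr s k)
      else to_parent T C st
  | LCommit => st
  end.

Definition sale (p v : R) : bool := if Rle_dec p v then true else false.

(** An adversary maps the history (list of (posted price, observed feedback),
    most recent first) and the current posted price to the observed feedback.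
    The algorithm is deterministic, so this covers adversaries that see the
    history and the (degenerate) distribution of the price. *)
Definition adversary : Type := list (R * bool) -> R -> bool.

Fixpoint run (T C : nat) (adv : adversary) (n : nat) : state * list (R * bool) :=
  match n with
  | O => (init_state T C, [])
  | S n' =>
      let (st, h) := run T C adv n' in
      let p := price st in
      let sigma := adv h p in
      (step T C st sigma, (p, sigma) :: h)
  end.

Definition history (T C : nat) (adv : adversary) : list (R * bool) :=
  snd (run T C adv T).

Definition corruptions (T C : nat) (v : R) (adv : adversary) : nat :=
  length (filter (fun ps => negb (Bool.eqb (snd ps) (sale (fst ps) v)))
                 (history T C adv)).

Definition revenue (T C : nat) (v : R) (adv : adversary) : R :=
  fold_right (fun ps acc => (if sale (fst ps) v then fst ps else 0) + acc) 0
             (history T C adv).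

Definition regret (T C : nat) (v : R) (adv : adversary) : R :=
  INR T * v - revenue T C v adv.

Definition log2R (x : R) : R := ln x / ln 2.

(* Main.v *)
Require Import Defs.
From Stdlib Require Import Reals Lra Lia Arith List Bool.
Import ListNotations.
Open Scope R_scope.

Lemma INR_pow2 d : INR (2 ^ d) = 2 ^ d.
Proof. rewrite pow_INR. replace (INR 2) with 2 by (simpl; lra). reflexivity. Qed.

Lemma pow2_pos d : 0 < 2 ^ d.
Proof. apply pow_lt; lra. Qed.

Lemma nodeL_eq d k : nodeL d k = INR k / 2 ^ d.
Proof. unfold nodeL; rewrite INR_pow2; reflexivity. Qed.
Lemma nodeR_eq d k : nodeR d k = (INR k + 1) / 2 ^ d.
Proof. unfold nodeR; rewrite INR_pow2, S_INR; reflexivity. Qed.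
Lemma nodeM_eq d k : nodeM d k = (INR k + /2) / 2 ^ d.
Proof.
  unfold nodeM; rewrite INR_pow2. rewrite plus_INR, mult_INR.
  replace (INR 1) with 1 by reflexivity.
  replace (INR 2) with 2 by (simpl; lra).
  change (2 ^ S d) with (2 * 2 ^ d).
  field. apply pow_nonzero; lra.
Qed.

Lemma nodeL_2k d k : nodeL (S d) (2 * k) = nodeL d k.
Proof.
  rewrite !nodeL_eq, mult_INR. replace (INR 2) with 2 by (simpl; lra).
  change (2 ^ S d) with (2 * 2 ^ d). field. apply pow_nonzero; lra.
Qed.
Lemma nodeR_2k d k : nodeR (S d) (2 * k) = nodeM d k.
Proof.
  rewrite nodeR_eq, nodeM_eq, mult_INR. replace (INR 2) with 2 by (simpl; lra).
  change (2 ^ S d) with (2 * 2 ^ d). field. apply pow_nonzero; lra.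
Qed.
Lemma nodeL_2k1 d k : nodeL (S d) (2 * k + 1) = nodeM d k.
Proof.
  rewrite nodeL_eq, nodeM_eq, plus_INR, mult_INR. replace (INR 2) with 2 by (simpl; lra).
  replace (INR 1) with 1 by reflexivity.
  change (2 ^ S d) with (2 * 2 ^ d). field. apply pow_nonzero; lra.
Qed.
Lemma nodeR_2k1 d k : nodeR (S d) (2 * k + 1) = nodeR d k.
Proof.
  rewrite !nodeR_eq, plus_INR, mult_INR. replace (INR 2) with 2 by (simpl; lra).
  replace (INR 1) with 1 by reflexivity.
  change (2 ^ S d) with (2 * 2 ^ d). field. apply pow_nonzero; lra.
Qed.

Lemma nodeLM d k : nodeL d k < nodeM d k.
Proof. rewrite nodeL_eq, nodeM_eq. unfold Rdiv. apply Rmult_lt_compat_r.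
  apply Rinv_0_lt_compat, pow2_pos. lra. Qed.
Lemma nodeMR d k : nodeM d k < nodeR d k.
Proof. rewrite nodeR_eq, nodeM_eq. unfold Rdiv. apply Rmult_lt_compat_r.
  apply Rinv_0_lt_compat, pow2_pos. lra. Qed.
Lemma nodeRL d k : nodeR d k - nodeL d k = / 2 ^ d.
Proof. rewrite nodeR_eq, nodeL_eq. field. apply pow_nonzero; lra. Qed.

Lemma nodeL_0 d : nodeL d 0 = 0.
Proof. rewrite nodeL_eq. simpl. unfold Rdiv. ring. Qed.
Lemma nodeR_1 d k : S k = (2 ^ d)%nat -> nodeR d k = 1.
Proof. intro H. unfold nodeR. rewrite H. field. rewrite INR_pow2. apply pow_nonzero; lra. Qed.

Lemma nodeL_nonneg d k : 0 <= nodeL d k.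
Proof. rewrite nodeL_eq. unfold Rdiv. apply Rmult_le_pos. apply pos_INR.
  left; apply Rinv_0_lt_compat, pow2_pos. Qed.
Lemma nodeM_nonneg d k : 0 <= nodeM d k.
Proof. pose proof (nodeL_nonneg d k); pose proof (nodeLM d k); lra. Qed.
Lemma nodeR_nonneg d k : 0 <= nodeR d k.
Proof. pose proof (nodeM_nonneg d k); pose proof (nodeMR d k); lra. Qed.

Lemma nodeL_pos_k d k : 0 < nodeL d k -> k <> 0%nat.
Proof. intros H E; subst; rewrite nodeL_0 in H; lra. Qed.

Lemma price_nonneg st : 0 <= price st.
Proof. unfold price; destruct (st_ph st); auto using nodeL_nonneg, nodeR_nonneg, nodeM_nonneg. Qed.

Lemma sale_true p v : sale p v = true <-> p <= v.
Proof. unfold sale; destruct (Rle_dec p v); split; intros; auto; try discriminate; contradiction. Qed.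
Lemma sale_false p v : sale p v = false <-> v < p.
Proof. unfold sale; destruct (Rle_dec p v); split; intros; auto; try discriminate; lra. Qed.

Definition good v d k := nodeL d k <= v < nodeR d k.
Definition goodb v d k : bool :=
  if Rle_dec (nodeL d k) v then (if Rlt_dec v (nodeR d k) then true else false) else false.
Lemma goodb_true v d k : goodb v d k = true <-> good v d k.
Proof. unfold goodb, good. destruct (Rle_dec (nodeL d k) v); [destruct (Rlt_dec v (nodeR d k))|]; split; intros;
  try discriminate; try tauto; lra. Qed.
Lemma goodb_false v d k : goodb v d k = false <-> ~ good v d k.
Proof. unfold goodb, good. destruct (Rle_dec (nodeL d k) v); [destruct (Rlt_dec v (nodeR d k))|]; split; intros;
  try discriminate; try tauto; lra. Qed.

Lemma good_dec v d k : {good v d k} + {~ good v d k}.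
Proof. destruct (goodb v d k) eqn:E; [left; apply goodb_true | right; apply goodb_false]; auto. Qed.

Lemma good_root v : 0 <= v < 1 -> good v 0 0.
Proof. intros. unfold good. rewrite nodeL_0. rewrite (nodeR_1 0 0) by reflexivity. lra. Qed.

Lemma child_cases c : (c = 2 * Nat.div2 c)%nat \/ (c = 2 * Nat.div2 c + 1)%nat.
Proof. destruct (Nat.Even_or_Odd c) as [[q Hq]|[q Hq]]; subst c.
  left. rewrite Nat.div2_double; reflexivity.
  right. rewrite Nat.add_1_r, Nat.div2_succ_double. lia. Qed.

Lemma good_parent v d c : good v (S d) c -> good v d (Nat.div2 c).
Proof.
  unfold good. destruct (child_cases c) as [E|E]; rewrite E at 1 2.
  - rewrite nodeL_2k, nodeR_2k. pose proof (nodeMR d (Nat.div2 c)). lra.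
  - rewrite nodeL_2k1, nodeR_2k1. pose proof (nodeLM d (Nat.div2 c)). lra.
Qed.

Definition tchild v d k : nat := if sale (nodeM d k) v then (2 * k + 1)%nat else (2 * k)%nat.

Lemma tchild_good v d k : good v d k -> good v (S d) (tchild v d k).
Proof. unfold tchild, good. destruct (sale (nodeM d k) v) eqn:E.
  - apply sale_true in E. rewrite nodeL_2k1, nodeR_2k1. lra.
  - apply sale_false in E. rewrite nodeL_2k, nodeR_2k. lra. Qed.

Lemma tchild_div2 v d k : Nat.div2 (tchild v d k) = k.
Proof. unfold tchild; destruct (sale _ _).
  rewrite Nat.add_1_r, Nat.div2_succ_double; reflexivity. apply Nat.div2_double. Qed.

Lemma tchild_lt v d k : (k < 2 ^ d)%nat -> (tchild v d k < 2 ^ S d)%nat.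
Proof. intros. rewrite Nat.pow_succ_r'. unfold tchild; destruct (sale _ _); lia. Qed.

Lemma good_unique v d k k' : good v d k -> good v d k' -> k = k'.
Proof.
  unfold good. rewrite !nodeL_eq, !nodeR_eq. intros [H1 H2] [H3 H4].
  pose proof (pow2_pos d).
  assert (A : INR k < INR k' + 1).
  { apply (Rmult_lt_reg_r (/ 2 ^ d)). apply Rinv_0_lt_compat; auto.
    unfold Rdiv in *. lra. }
  assert (B : INR k' < INR k + 1).
  { apply (Rmult_lt_reg_r (/ 2 ^ d)). apply Rinv_0_lt_compat; auto.
    unfold Rdiv in *. lra. }
  rewrite <- S_INR in A, B. apply INR_lt in A. apply INR_lt in B. lia.
Qed.

Lemma exists_good v : 0 <= v < 1 -> forall d, exists k, (k < 2 ^ d)%nat /\ good v d k.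
Proof.
  intros Hv d. induction d as [|d [k [Hk Hg]]].
  - exists 0%nat. split. simpl; lia. apply good_root; auto.
  - exists (tchild v d k). split. apply tchild_lt; auto. apply tchild_good; auto.
Qed.

Lemma div2_lt_pow d k : (k < 2 ^ d)%nat -> (Nat.div2 k < 2 ^ Nat.pred d)%nat.
Proof.
  intros H. destruct d as [|d].
  - simpl in *. assert (k = 0%nat) by lia. subst. simpl. lia.
  - simpl Nat.pred. rewrite Nat.pow_succ_r' in H.
    destruct (child_cases k) as [E|E]; lia.
Qed.

Fixpoint udist (v : R) (d k : nat) : nat :=
  match d with
  | O => O
  | S d' => if goodb v (S d') k then O else S (udist v d' (Nat.div2 k))
  end.

Lemma udist_good v d k : good v d k -> udist v d k = 0%nat.
Proof. destruct d; simpl; auto. intros H. apply goodb_true in H. rewrite H. auto. Qed.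
Lemma udist_bad v d k : ~ good v (S d) k -> udist v (S d) k = S (udist v d (Nat.div2 k)).
Proof. intros H. apply goodb_false in H. simpl. rewrite H. auto. Qed.

Definition base (T C : nat) (v : R) (kg : nat) (d k : nat) (s : nat -> nat) : nat :=
  (5 * udist v d k + 3 * (depth T - d) + 2 * (C + 1 - s kg))%nat.

Lemma base_child T C v kg d c s : (d < depth T)%nat ->
  (base T C v kg d (Nat.div2 c) s <= base T C v kg (S d) c s + 3 /\
   base T C v kg (S d) c s <= base T C v kg d (Nat.div2 c) s + 2)%nat.
Proof.
  intros Hd. unfold base. destruct (good_dec v (S d) c) as [G|G].
  - rewrite (udist_good _ _ _ G), (udist_good _ _ _ (good_parent _ _ _ G)). lia.
  - rewrite (udist_bad _ _ _ G). lia.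
Qed.

Lemma base_child_good T C v kg d c s : (d < depth T)%nat -> good v (S d) c ->
  (base T C v kg (S d) c s + 3 = base T C v kg d (Nat.div2 c) s)%nat.
Proof.
  intros Hd G. unfold base.
  rewrite (udist_good _ _ _ G), (udist_good _ _ _ (good_parent _ _ _ G)). lia.
Qed.

Lemma base_parent T C v kg d k s : 0 <= v < 1 -> (d <= depth T)%nat -> (k < 2 ^ d)%nat ->
  (base T C v kg d k s <= base T C v kg (Nat.pred d) (Nat.div2 k) s + 2 /\
   base T C v kg (Nat.pred d) (Nat.div2 k) s <= base T C v kg d k s + 3)%nat.
Proof.
  intros Hv Hd Hk. destruct d as [|d].
  - simpl in Hk. assert (k = 0%nat) by lia. subst. simpl. lia.
  - simpl Nat.pred. unfold base. destruct (good_dec v (S d) k) as [G|G].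
    + rewrite (udist_good _ _ _ G), (udist_good _ _ _ (good_parent _ _ _ G)). lia.
    + rewrite (udist_bad _ _ _ G). lia.
Qed.

Lemma base_parent_bad T C v kg d k s : 0 <= v < 1 -> (d <= depth T)%nat -> (k < 2 ^ d)%nat ->
  ~ good v d k ->
  (base T C v kg (Nat.pred d) (Nat.div2 k) s + 2 = base T C v kg d k s)%nat.
Proof.
  intros Hv Hd Hk G. destruct d as [|d].
  - simpl in Hk. assert (k = 0%nat) by lia. subst. exfalso; apply G, good_root; auto.
  - simpl Nat.pred. unfold base. rewrite (udist_bad _ _ _ G). lia.
Qed.

Lemma base_incr T C v kg d k s :
  (base T C v kg d k (incr s k) <= base T C v kg d k s)%nat.
Proof. unfold base, incr. destruct (Nat.eqb kg k); lia. Qed.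

Lemma base_incr_ne T C v kg d k s : k <> kg ->
  (base T C v kg d k (incr s k) = base T C v kg d k s)%nat.
Proof. intros H. unfold base, incr. destruct (Nat.eqb kg k) eqn:E; auto.
  apply Nat.eqb_eq in E. congruence. Qed.

Lemma base_incr_eq T C v kg d s : (s kg <= C)%nat ->
  (base T C v kg d kg (incr s kg) + 2 = base T C v kg d kg s)%nat.
Proof. intros H. unfold base, incr. rewrite Nat.eqb_refl. lia. Qed.

Definition ltvb (v x : R) : bool := if Rlt_dec v x then true else false.
Lemma ltvb_true v x : ltvb v x = true <-> v < x.
Proof. unfold ltvb; destruct (Rlt_dec v x); split; intros; auto; try discriminate; contradiction. Qed.
Lemma ltvb_false v x : ltvb v x = false <-> x <= v.
Proof. unfold ltvb; destruct (Rlt_dec v x); split; intros; auto; try discriminate; lra. Qed.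

Definition fpot (T C : nat) (v : R) (kg : nat) (st : state) : nat :=
  let d := st_d st in let k := st_k st in let s := st_s st in
  match st_ph st with
  | NCheckL | LCheckL => base T C v kg d k s
  | NCheckR b => if b && ltvb v (nodeR d k) then (2 + base T C v kg (S d) (tchild v d k) s)%nat
                 else (1 + base T C v kg (Nat.pred d) (Nat.div2 k) s)%nat
  | NMid => (1 + base T C v kg (S d) (tchild v d k) s)%nat
  | LCheckR b => if b && ltvb v (nodeR d k) then
                   (if sale (nodeL d k) v then base T C v kg d k s - 1 else base T C v kg d k s + 1)%nat
                 else (1 + base T C v kg (Nat.pred d) (Nat.div2 k) s)%nat
  | LCommit => 0%nat
  end.

Definition valid (T C : nat) (st : state) : Prop :=
  (st_k st < 2 ^ st_d st)%nat /\
  match st_ph st with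
  | NCheckL | NCheckR _ | NMid => (st_d st < depth T)%nat
  | LCheckL | LCheckR _ => st_d st = depth T /\ (st_s st (st_k st) <= C)%nat
  | LCommit => st_d st = depth T /\ (C < st_s st (st_k st))%nat
  end.

Lemma valid_enter T C d k s : (d <= depth T)%nat -> (k < 2 ^ d)%nat -> valid T C (enter T C d k s).
Proof.
  intros Hd Hk. unfold enter, valid.
  destruct (Nat.ltb d (depth T)) eqn:E1; simpl.
  - apply Nat.ltb_lt in E1. auto.
  - apply Nat.ltb_ge in E1. destruct (Nat.leb (s k) C) eqn:E2; simpl.
    + apply Nat.leb_le in E2. repeat split; auto; lia.
    + apply Nat.leb_gt in E2. repeat split; auto; lia.
Qed.

Lemma fpot_enter T C v kg d k s : (fpot T C v kg (enter T C d k s) <= base T C v kg d k s)%nat.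
Proof.
  unfold enter. destruct (Nat.ltb d (depth T)); [|destruct (Nat.leb (s k) C)]; unfold fpot; simpl; lia.
Qed.

Lemma enter_s T C d k s : st_s (enter T C d k s) = s.
Proof. unfold enter. destruct (Nat.ltb d (depth T)); [|destruct (Nat.leb (s k) C)]; reflexivity. Qed.

Lemma enter_ph T C d k s : st_ph (enter T C d k s) = NCheckL \/ st_ph (enter T C d k s) = LCheckL
   \/ st_ph (enter T C d k s) = LCommit.
Proof. unfold enter. destruct (Nat.ltb d (depth T)); [|destruct (Nat.leb (s k) C)]; simpl; auto. Qed.

Lemma valid_step T C st sigma : (1 <= depth T)%nat -> valid T C st -> valid T C (step T C st sigma).
Proof.
  intros HD [Hk Hph]. destruct st as [d k ph s]; simpl in *.
  destruct ph; unfold step, to_parent; simpl.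
  - split; simpl; auto.
  - destruct (bL && passR _ sigma).
    + split; simpl; auto.
    + apply valid_enter. lia. apply div2_lt_pow; auto.
  - destruct sigma; apply valid_enter; try lia.
    + rewrite Nat.pow_succ_r'. lia.
    + rewrite Nat.pow_succ_r'. lia.
  - split; simpl; auto.
  - destruct (bL && passR _ sigma).
    + apply valid_enter; lia.
    + apply valid_enter. lia. apply div2_lt_pow; auto.
  - split; simpl; auto.
Qed.

Lemma bad_cases v d k : ~ good v d k -> v < nodeL d k \/ nodeR d k <= v.
Proof. unfold good. intros H. destruct (Rlt_dec v (nodeL d k)); [left; auto|right].
  destruct (Rle_dec (nodeR d k) v); auto. exfalso; apply H; lra. Qed.

Lemma passL_false_bad v d k s ph : 0 <= v -> v < nodeL d k ->
  passL (mkState d k ph s) (sale (nodeL d k) v) = false.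
Proof. intros H0 H. unfold passL; cbn [st_k st_d].
  assert (k <> 0%nat) by (apply (nodeL_pos_k d); lra).
  apply Nat.eqb_neq in H1. rewrite H1. simpl. apply sale_false; auto. Qed.

Lemma passL_true_good v d k s ph : nodeL d k <= v ->
  passL (mkState d k ph s) (sale (nodeL d k) v) = true.
Proof. intros H. unfold passL; cbn [st_k st_d]. assert (sale (nodeL d k) v = true) by (apply sale_true; auto).
  rewrite H0. apply orb_true_r. Qed.

Lemma passR_true v d k s ph : v < nodeR d k ->
  passR (mkState d k ph s) (sale (nodeR d k) v) = true.
Proof. intros H. unfold passR; cbn [st_k st_d]. assert (sale (nodeR d k) v = false) by (apply sale_false; auto).
  rewrite H0. apply orb_true_r. Qed.

Lemma passR_false v d k s ph : v < 1 -> nodeR d k <= v ->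
  passR (mkState d k ph s) (sale (nodeR d k) v) = false.
Proof. intros H1 H. unfold passR; cbn [st_k st_d]. assert (sale (nodeR d k) v = true) by (apply sale_true; auto).
  rewrite H0. destruct (Nat.eqb (S k) (2 ^ d)) eqn:E; auto.
  apply Nat.eqb_eq in E. rewrite (nodeR_1 d k E) in H. lra. Qed.

Ltac fe := repeat match goal with
  | |- context [fpot ?T ?C ?v ?kg (enter ?T ?C ?d ?k ?s)] =>
    let H := fresh "FE" in let X := fresh "X" in
    pose proof (fpot_enter T C v kg d k s) as H;
    set (X := fpot T C v kg (enter T C d k s)) in *; clearbody X
  end.

Lemma step_pot T C v kg st sigma : 0 <= v < 1 -> (1 <= depth T)%nat -> good v (depth T) kg ->
  valid T C st -> st_ph st <> LCommit ->
  (fpot T C v kg (step T C st sigma) <= fpot T C v kg st + 5)%nat /\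
  (sigma = sale (price st) v -> (fpot T C v kg (step T C st sigma) + 1 <= fpot T C v kg st)%nat).
Proof.
  intros Hv HD Hkg [Hk Hph] Hnc. destruct st as [d k ph s]; simpl in *.
  pose proof (base_parent T C v kg d k s Hv) as BP.
  destruct ph; simpl in Hph; try (destruct Hph as [Hd Hs]; subst d);
    [ .. | exfalso; apply Hnc; reflexivity].
  -
    unfold step, fpot, price; cbn [st_d st_k st_ph st_s].
    destruct (BP ltac:(lia) Hk) as [BP1 BP2].
    destruct (base_child T C v kg d (tchild v d k) s Hph) as [BC1 BC2]; rewrite tchild_div2 in BC1, BC2.
    split.
    + destruct (_ && _); lia.
    + intros ->. destruct (good_dec v d k) as [G|G].
      * rewrite (passL_true_good v d k s NCheckL) by (destruct G; auto).
        assert (E : ltvb v (nodeR d k) = true) by (apply ltvb_true; destruct G; auto).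
        rewrite E. cbv beta iota delta [andb].
        pose proof (base_child_good T C v kg d (tchild v d k) s Hph (tchild_good _ _ _ G)) as H.
        rewrite tchild_div2 in H. lia.
      * pose proof (base_parent_bad T C v kg d k s Hv ltac:(lia) Hk G) as H.
        destruct (bad_cases _ _ _ G) as [L|R].
        -- rewrite (passL_false_bad v d k s NCheckL) by (auto; lra). cbv beta iota delta [andb]. lia.
        -- assert (E : ltvb v (nodeR d k) = false) by (apply ltvb_false; auto).
           rewrite E, andb_false_r. lia.
  -
    unfold step, price, to_parent; cbn [st_d st_k st_ph st_s].
    destruct (BP ltac:(lia) Hk) as [BP1 BP2].
    destruct (base_child T C v kg d (tchild v d k) s Hph) as [BC1 BC2]; rewrite tchild_div2 in BC1, BC2.
    split.
    + destruct (bL && passR _ sigma); fe; unfold fpot; cbn [st_d st_k st_ph st_s];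
        destruct (bL && ltvb _ _); cbv beta iota delta [andb]; lia.
    + intros ->. destruct bL; cbv beta iota delta [andb].
      * destruct (ltvb v (nodeR d k)) eqn:E.
        -- apply ltvb_true in E as E'. rewrite (passR_true v d k s (NCheckR true)) by auto.
           unfold fpot; cbn [st_d st_k st_ph st_s]. rewrite E. cbv beta iota delta [andb]. lia.
        -- apply ltvb_false in E as E'. rewrite (passR_false v d k s (NCheckR true)) by (auto; lra).
           fe; unfold fpot; cbn [st_d st_k st_ph st_s]. rewrite E. cbv beta iota delta [andb]. lia.
      * fe; unfold fpot; cbn [st_d st_k st_ph st_s]; cbv beta iota delta [andb]. lia.
  -
    unfold step, price; cbn [st_d st_k st_ph st_s].
    destruct (base_child T C v kg d (tchild v d k) s Hph) as [BC1 BC2]; rewrite tchild_div2 in BC1, BC2.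
    destruct (base_child T C v kg d (2 * k + 1) s Hph) as [B11 B12].
    assert (Hd1 : Nat.div2 (2*k+1) = k) by (rewrite Nat.add_1_r; apply Nat.div2_succ_double).
    rewrite Hd1 in B11, B12.
    destruct (base_child T C v kg d (2 * k) s Hph) as [B01 B02].
    rewrite Nat.div2_double in B01, B02.
    split.
    + destruct sigma; fe; unfold fpot; cbn [st_d st_k st_ph st_s]; lia.
    + intros ->. destruct (sale (nodeM d k) v) eqn:ES; fe; unfold fpot; cbn [st_d st_k st_ph st_s]; unfold tchild in *; rewrite ES in *; lia.
  -
    unfold step, fpot, price; cbn [st_d st_k st_ph st_s].
    destruct (BP ltac:(lia) Hk) as [BP1 BP2].
    split.
    + destruct (_ && _); [destruct (sale _ _)|]; lia.
    + intros ->. destruct (good_dec v (depth T) k) as [G|G].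
      * rewrite (passL_true_good v (depth T) k s LCheckL) by (destruct G; auto).
        assert (E : ltvb v (nodeR (depth T) k) = true) by (apply ltvb_true; destruct G; auto).
        rewrite E. cbv beta iota delta [andb].
        assert (E2 : sale (nodeL (depth T) k) v = true) by (apply sale_true; destruct G; auto).
        rewrite E2.
        pose proof (good_unique _ _ _ _ G Hkg). subst k.
        unfold base. lia.
      * pose proof (base_parent_bad T C v kg (depth T) k s Hv ltac:(lia) Hk G) as H.
        destruct (bad_cases _ _ _ G) as [L|R].
        -- rewrite (passL_false_bad v (depth T) k s LCheckL) by (auto; lra). cbv beta iota delta [andb]. lia.
        -- assert (E : ltvb v (nodeR (depth T) k) = false) by (apply ltvb_false; auto).
           rewrite E, andb_false_r. lia.
  -
    unfold step, price, to_parent; cbn [st_d st_k st_ph st_s].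
    destruct (BP ltac:(lia) Hk) as [BP1 BP2].
    pose proof (base_incr T C v kg (depth T) k s) as BI.
    split.
    + destruct (bL && passR _ sigma); fe; unfold fpot; cbn [st_d st_k st_ph st_s];
        destruct (bL && ltvb _ _); try destruct (sale _ _); cbv beta iota delta [andb]; lia.
    + intros ->. destruct bL; cbv beta iota delta [andb].
      * destruct (ltvb v (nodeR (depth T) k)) eqn:E.
        -- apply ltvb_true in E as E'. rewrite (passR_true v (depth T) k s (LCheckR true)) by auto.
           fe; unfold fpot; cbn [st_d st_k st_ph st_s]. rewrite E. cbv beta iota delta [andb].
           destruct (sale (nodeL (depth T) k) v) eqn:E2.
           ++ apply sale_true in E2.
              assert (G : good v (depth T) k) by (split; auto).
              pose proof (good_unique _ _ _ _ G Hkg). subst k.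
              pose proof (base_incr_eq T C v kg (depth T) s Hs). unfold base in *. lia.
           ++ apply sale_false in E2.
              assert (k <> kg) by (intro; subst; destruct Hkg; lra).
              rewrite (base_incr_ne T C v kg (depth T) k s) in * by auto. lia.
        -- apply ltvb_false in E as E'. rewrite (passR_false v (depth T) k s (LCheckR true)) by (auto; lra).
           fe; unfold fpot; cbn [st_d st_k st_ph st_s]. rewrite E. cbv beta iota delta [andb]. lia.
      * fe; unfold fpot; cbn [st_d st_k st_ph st_s]; cbv beta iota delta [andb]. lia.
Qed.

Lemma phase_eq_dec_commit (p : phase) : {p = LCommit} + {p <> LCommit}.
Proof. destruct p; [right|right|right|right|right|left]; congruence. Qed.

Definition pend (v : R) (st : state) (j : nat) : nat :=
  match st_ph st with
  | LCheckR true => if Nat.eqb (st_k st) j then (if Rlt_dec v (nodeL (st_d st) j) then 1%nat else 0%nat) else 0%nat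
  | _ => 0%nat
  end.

Lemma pend_enter v T C d k s j : pend v (enter T C d k s) j = 0%nat.
Proof. unfold pend. destruct (enter_ph T C d k s) as [E|[E|E]]; rewrite E; reflexivity. Qed.

Lemma step_cnt T C v kg st sigma : 0 <= v < 1 -> good v (depth T) kg -> valid T C st ->
  forall j, j <> kg ->
  (st_s (step T C st sigma) j + pend v (step T C st sigma) j <=
   st_s st j + pend v st j + (if Bool.eqb sigma (sale (price st) v) then 0 else 1))%nat.
Proof.
  intros Hv Hkg [Hk Hph] j Hj. destruct st as [d k ph s]; cbn [st_d st_k st_ph st_s] in *.
  destruct ph; unfold step, price, to_parent; cbn [st_d st_k st_ph st_s].
  - unfold pend; cbn [st_d st_k st_ph st_s]. lia.
  - destruct (bL && passR _ sigma); [unfold pend; cbn [st_d st_k st_ph st_s]; lia|].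
    rewrite enter_s, pend_enter. lia.
  - destruct sigma; rewrite enter_s, pend_enter; lia.
  - destruct Hph as [Hd Hs]. unfold pend; cbn [st_d st_k st_ph st_s].
    destruct (passL _ sigma) eqn:EP; [|lia].
    destruct (Nat.eqb k j) eqn:Ekj; [|lia].
    destruct (Rlt_dec v (nodeL d j)) as [L|L]; [|lia].
    apply Nat.eqb_eq in Ekj; subst j.
    assert (k <> 0%nat) by (apply (nodeL_pos_k d); lra).
    unfold passL in EP; cbn [st_k] in EP. apply Nat.eqb_neq in H. rewrite H in EP. simpl in EP. subst sigma.
    assert (sale (nodeL d k) v = false) by (apply sale_false; auto). rewrite H0. simpl. lia.
  - destruct Hph as [Hd Hs].
    destruct (bL && passR _ sigma) eqn:EB.
    + rewrite enter_s, pend_enter. unfold incr. destruct (Nat.eqb j k) eqn:Ejk; [|lia].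
      apply Nat.eqb_eq in Ejk; subst j. apply andb_prop in EB as [Eb EP]. subst bL.
      unfold pend; cbn [st_d st_k st_ph st_s]. rewrite Nat.eqb_refl.
      destruct (Rlt_dec v (nodeL d k)) as [L|L]; [lia|].
      assert (G : ~ good v d k) by (intro G; subst d; apply Hj; eapply good_unique; eauto).
      destruct (bad_cases _ _ _ G) as [L'|R]; [lra|].
      unfold passR in EP; cbn [st_k st_d] in EP.
      destruct (Nat.eqb (S k) (2 ^ d)) eqn:E1.
      * apply Nat.eqb_eq in E1. rewrite (nodeR_1 d k E1) in R. lra.
      * simpl in EP. destruct sigma; [discriminate|].
        assert (sale (nodeR d k) v = true) by (apply sale_true; auto). rewrite H. simpl. lia.
    + rewrite enter_s, pend_enter. lia.
  - lia.
Qed.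

Definition corrh (v : R) (h : list (R * bool)) : nat :=
  length (filter (fun ps => negb (Bool.eqb (snd ps) (sale (fst ps) v))) h).
Definition lossh (v : R) (h : list (R * bool)) : R :=
  fold_right (fun ps acc => (v - (if sale (fst ps) v then fst ps else 0)) + acc) 0 h.

Lemma corrh_cons v p sg h : corrh v ((p, sg) :: h) = (corrh v h + (if Bool.eqb sg (sale p v) then 0 else 1))%nat.
Proof. unfold corrh. simpl. destruct (Bool.eqb sg (sale p v)); simpl; lia. Qed.

Lemma round_loss_le1 v p : 0 <= p -> v < 1 -> v - (if sale p v then p else 0) <= 1.
Proof. intros. destruct (sale p v); lra. Qed.

Lemma run_length T C adv n : length (snd (run T C adv n)) = n.
Proof. induction n; simpl; auto. destruct (run T C adv n) as [st h]; simpl in *; lia. Qed.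

Lemma main_inv T C v adv kg : 0 <= v < 1 -> (1 <= depth T)%nat -> good v (depth T) kg ->
  forall n st h, run T C adv n = (st, h) -> (corrh v h <= C)%nat ->
  valid T C st /\ (forall j, j <> kg -> (st_s st j + pend v st j <= corrh v h)%nat) /\
  lossh v h + INR (fpot T C v kg st) <=
    INR (base T C v kg 0 0 (fun _ => 0%nat)) + 6 * INR (corrh v h) + INR n / 2 ^ depth T.
Proof.
  intros Hv HD Hkg n. pose proof (pow2_pos (depth T)) as P2.
  induction n as [|n IH]; intros st h Hrun Hc.
  - simpl in Hrun. inversion Hrun; subst. unfold init_state.
    split; [apply valid_enter; simpl; lia|]. split.
    + intros j _. rewrite enter_s, pend_enter. simpl. lia.
    + simpl. pose proof (fpot_enter T C v kg 0 0 (fun _ => 0%nat)) as F. apply le_INR in F.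
      unfold lossh, corrh; simpl. unfold Rdiv. lra.
  - simpl in Hrun. destruct (run T C adv n) as [st0 h0] eqn:E0. inversion Hrun; subst; clear Hrun.
    set (sg := adv h0 (price st0)) in *.
    rewrite corrh_cons in Hc |- *.
    destruct (IH st0 h0 eq_refl ltac:(lia)) as [V [CNT L]].
    split; [apply valid_step; auto|]. split.
    + intros j Hj. pose proof (step_cnt T C v kg st0 sg Hv Hkg V j Hj). specialize (CNT j Hj). lia.
    + change (lossh v ((price st0, sg) :: h0)) with
        ((v - (if sale (price st0) v then price st0 else 0)) + lossh v h0).
      rewrite S_INR. unfold Rdiv in *. rewrite Rmult_plus_distr_r, Rmult_1_l.
      pose proof (Rinv_0_lt_compat _ P2) as IP.
      assert (CI : INR (corrh v h0) <= INR (corrh v h0 + (if Bool.eqb sg (sale (price st0) v) then 0 else 1)))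
        by (apply le_INR; lia).
      destruct (phase_eq_dec_commit (st_ph st0)) as [EC|EC].
      *
        destruct st0 as [d k ph s]; cbn [st_ph] in EC; subst ph.
        assert (Est : step T C {| st_d := d; st_k := k; st_ph := LCommit; st_s := s |} sg =
                {| st_d := d; st_k := k; st_ph := LCommit; st_s := s |}) by reflexivity.
        rewrite Est.
        destruct V as [Hk [Hd Hs]]; cbn [st_d st_k st_ph st_s] in *. subst d.
        assert (k = kg).
        { destruct (Nat.eq_dec k kg); auto. specialize (CNT k n0). cbn [st_s] in CNT. lia. }
        subst k. unfold price in *; cbn [st_ph st_d st_k] in *.
        change (fpot T C v kg {| st_d := depth T; st_k := kg; st_ph := LCommit; st_s := s |}) with 0%nat in *.
        change (INR 0) with 0 in *.
        destruct Hkg as [G1 G2].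
        assert (sale (nodeL (depth T) kg) v = true) by (apply sale_true; auto). rewrite H in *.
        pose proof (nodeRL (depth T) kg). lra.
      * destruct (step_pot T C v kg st0 sg Hv HD Hkg V EC) as [S1 S2].
        pose proof (round_loss_le1 v (price st0) (price_nonneg st0) (proj2 Hv)) as RL.
        destruct (Bool.eqb sg (sale (price st0) v)) eqn:Eb.
        -- apply Bool.eqb_prop in Eb. specialize (S2 Eb). apply le_INR in S2. rewrite plus_INR in S2.
           simpl (INR 1) in S2. rewrite Nat.add_0_r. lra.
        -- apply le_INR in S1. rewrite plus_INR in S1. rewrite plus_INR.
           replace (INR 5) with 5 in S1 by (simpl; lra). simpl (INR 1). lra.
Qed.

Lemma rev_loss v h :
  INR (length h) * v - fold_right (fun ps acc => (if sale (fst ps) v then fst ps else 0) + acc) 0 h = lossh v h.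
Proof. induction h as [|[p sg] h IH]; cbn [length fold_right fst snd]. simpl; ring.
  rewrite S_INR. change (lossh v ((p, sg) :: h)) with ((v - (if sale p v then p else 0)) + lossh v h).
  rewrite <- IH. ring. Qed.

Theorem theorem4p3 :
  exists K : R, 0 < K /\
    forall (T C : nat) (v : R) (adv : adversary),
      (2 <= T)%nat ->
      0 <= v < 1 ->
      (corruptions T C v adv <= C)%nat ->
      regret T C v adv <= K * (INR C + log2R (INR T)).
Proof.
  exists 9. split; [lra|]. intros T C v adv HT Hv Hc.
  assert (HD : (1 <= depth T)%nat) by (apply Nat.log2_up_pos; lia).
  destruct (exists_good v Hv (depth T)) as [kg [Hkgl Hkg]].
  destruct (run T C adv T) as [st h] eqn:ER.
  assert (Hh : history T C adv = h) by (unfold history; rewrite ER; reflexivity).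
  assert (Hc' : (corrh v h <= C)%nat) by (unfold corruptions in Hc; rewrite Hh in Hc; exact Hc).
  destruct (main_inv T C v adv kg Hv HD Hkg T st h ER Hc') as [_ [_ L]].
  assert (Hlen : length h = T) by (pose proof (run_length T C adv T) as X; rewrite ER in X; exact X).
  assert (Reg : regret T C v adv = lossh v h).
  { unfold regret, revenue. rewrite Hh, <- rev_loss, Hlen. reflexivity. }
  rewrite Reg.
  set (D := depth T) in *.
  assert (Hb : base T C v kg 0 0 (fun _ => 0%nat) = (3 * D + 2 * C + 2)%nat).
  { unfold base. simpl udist. fold D. lia. }
  rewrite Hb in L.
  assert (HBR : INR (3 * D + 2 * C + 2) = 3 * INR D + 2 * INR C + 2).
  { rewrite !plus_INR, !mult_INR. simpl. lra. }
  rewrite HBR in L.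
  pose proof (pos_INR (fpot T C v kg st)).
  pose proof (Nat.log2_up_spec T ltac:(lia)) as [S1 S2]. change (Nat.log2_up T) with D in S1, S2.
  assert (TD : INR T / 2 ^ D <= 1).
  { apply le_INR in S2. rewrite INR_pow2 in S2. pose proof (pow2_pos D).
    unfold Rdiv. apply (Rmult_le_reg_r (2 ^ D)); auto. rewrite Rmult_assoc, Rinv_l by lra. lra. }
  assert (Hcr : INR (corrh v h) <= INR C) by (apply le_INR; auto).
  set (Lg := log2R (INR T)).
  assert (ln2 : 0 < ln 2) by (rewrite <- ln_1; apply ln_increasing; lra).
  assert (HlnT : ln (INR T) = Lg * ln 2) by (unfold Lg, log2R; field; lra).
  assert (T2 : 2 <= INR T) by (replace 2 with (INR 2) by (simpl; lra); apply le_INR; auto).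
  assert (Lg1 : 1 <= Lg).
  { apply (Rmult_le_reg_r (ln 2)); auto. rewrite Rmult_1_l, <- HlnT.
    destruct (Req_dec (INR T) 2) as [E|E]; [rewrite E; lra|]. left; apply ln_increasing; lra. }
  destruct D as [|D'] eqn:ED; [lia|].
  simpl Nat.pred in S1.
  assert (HD' : INR D' < Lg).
  { apply lt_INR in S1. rewrite INR_pow2 in S1.
    apply (Rmult_lt_reg_r (ln 2)); auto. rewrite <- HlnT, <- ln_pow by lra.
    apply ln_increasing; auto. apply pow2_pos. }
  rewrite S_INR in L. clearbody Lg. set (Q := INR T / 2 ^ S D') in *. clearbody Q. set (F := INR (fpot T C v kg st)) in *. set (CC := INR (corrh v h)) in *. pose proof (pos_INR C). lra.
Qed.
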